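(* For all graphs $G$ and $H$, \[\bar{\vartheta}(G \times H) = \min\{\bar{\vartheta}(G), \bar{\vartheta}(H)\}.\]
   Context: Graphs are finite, simple and undirected. The categorical product $G\times H$ has vertex set $V(G)\times V(H)$, with $(u_1,v_1)\sim(u_2,v_2)$ iff $u_1\sim u_2$ and $v_1\sim v_2$. For a real $k>1$, a strict vector $k$-coloring of a graph $G$ is a map $\varphi$ from $V(G)$ to the unit sphere of some $\mathbb{R}^{d}$ such that $\varphi(u)^T\varphi(v) = -\frac{1}{k-1}$ whenever $u\sim v$. The strict vector chromatic number $\bar{\vartheta}(G)$ is the infimum of real $k>1$ such that $G$ admits a strict vector $k$-coloring; equivalently, $\bar{\vartheta}(G)=\vartheta(\overline{G})$, the Lovász theta function of the complement of $G$. *)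

(* Defs.v *)
From HB Require Import structures.
From mathcomp Require Import all_boot all_order all_algebra.
From mathcomp Require Import boolp classical_sets reals.
Set Implicit Arguments. Unset Strict Implicit. Unset Printing Implicit Defensive.
Import Order.TTheory GRing.Theory Num.Theory.
Local Open Scope ring_scope.
Local Open Scope classical_set_scope.

Definition simple_graph (T : finType) (e : rel T) : Prop :=
  symmetric e /\ irreflexive e.

Definition cat_prod (T1 T2 : finType) (e1 : rel T1) (e2 : rel T2)
  : rel (T1 * T2)%type :=
  fun x y => e1 x.1 y.1 && e2 x.2 y.2.

Definition dotv (R : realType) (d : nat) (u v : 'rV[R]_d) : R :=
  (u *m v^T) 0 0.

Definition strict_vector_coloring (R : realType) (T : finType) (e : rel T)
  (k : R) (d : nat) (phi : T -> 'rV[R]_d) : Prop :=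
  (forall u, dotv (phi u) (phi u) = 1) /\
  (forall u v, e u v -> dotv (phi u) (phi v) = - (k - 1)^-1).

Definition svchi (R : realType) (T : finType) (e : rel T) : R :=
  inf [set k : R | 1 < k /\
         exists (d : nat) (phi : T -> 'rV[R]_d), strict_vector_coloring e k phi].

(* Main.v *)
Require Import Defs.
From mathcomp Require Import all_boot all_order all_algebra.
From mathcomp Require Import ring lra.
From mathcomp Require Import boolp classical_sets reals topology normedtype derive.
Import numFieldNormedType.Exports.
Import Order.TTheory GRing.Theory Num.Theory.
Local Open Scope ring_scope.
Set Implicit Arguments. Unset Strict Implicit. Unset Printing Implicit Defensive.

Section Basics.
Variable R : realType.

Lemma dotvE d (u v : 'rV[R]_d) : dotv u v = \sum_k u 0 k * v 0 k.
Proof. by rewrite /dotv !mxE; apply: eq_bigr => k _; rewrite mxE. Qed.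

Lemma dotv_row_mx d1 d2 (a c : 'rV[R]_d1) (b f : 'rV[R]_d2) :
  dotv (row_mx a b) (row_mx c f) = dotv a c + dotv b f.
Proof.
rewrite !dotvE big_split_ord /=; congr (_ + _); apply: eq_bigr => k _.
  by rewrite !row_mxEl.
by rewrite !row_mxEr.
Qed.

Lemma dotv_const (a b : R) : dotv (const_mx a : 'rV[R]_1) (const_mx b) = a * b.
Proof. by rewrite dotvE big_ord1 !mxE. Qed.

Lemma dotv0 d (a : 'rV[R]_d) : dotv 0 a = 0.
Proof. by rewrite dotvE big1 // => k _; rewrite mxE mul0r. Qed.

Variable T : finType.
Implicit Types (M : T -> T -> R) (x y : T -> R).

Definition bil M x y := \sum_u \sum_w x u * y w * M u w.
Definition qf M x := bil M x x.
Definition psd M := forall x, 0 <= qf M x.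
Definition symm M := forall u w, M u w = M w u.

Lemma sum_delta (w : T) (F : T -> R) : \sum_u (u == w)%:R * F u = F w.
Proof.
rewrite (bigD1 w) //= eqxx mul1r big1 ?addr0 // => u /negbTE ->.
by rewrite mul0r.
Qed.

Lemma sum_delta' (w : T) (F : T -> R) : \sum_u F u * (u == w)%:R = F w.
Proof. by rewrite -[RHS](sum_delta w); apply: eq_bigr => u _; rewrite mulrC. Qed.

Lemma bilDl M x1 x2 y : bil M (fun u => x1 u + x2 u) y = bil M x1 y + bil M x2 y.
Proof.
rewrite /bil -big_split; apply: eq_bigr => u _; rewrite -big_split.
by apply: eq_bigr => w _ /=; ring.
Qed.

Lemma bilDr M x y1 y2 : bil M x (fun u => y1 u + y2 u) = bil M x y1 + bil M x y2.
Proof.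
rewrite /bil -big_split; apply: eq_bigr => u _; rewrite -big_split.
by apply: eq_bigr => w _ /=; ring.
Qed.

Lemma bilZl M a x y : bil M (fun u => a * x u) y = a * bil M x y.
Proof.
rewrite /bil mulr_sumr; apply: eq_bigr => u _; rewrite mulr_sumr.
by apply: eq_bigr => w _ /=; ring.
Qed.

Lemma bilZr M a x y : bil M x (fun u => a * y u) = a * bil M x y.
Proof.
rewrite /bil mulr_sumr; apply: eq_bigr => u _; rewrite mulr_sumr.
by apply: eq_bigr => w _ /=; ring.
Qed.

Lemma bilC M x y : symm M -> bil M x y = bil M y x.
Proof.
move=> sM; rewrite /bil exchange_big /=; apply: eq_bigr => u _.
by apply: eq_bigr => w _; rewrite sM; ring.
Qed.

Lemma qfD M x y : symm M ->
  qf M (fun u => x u + y u) = qf M x + 2 * bil M x y + qf M y.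
Proof.
move=> sM; rewrite /qf bilDl !bilDr (bilC y x sM); ring.
Qed.

Lemma qfZ M a x : qf M (fun u => a * x u) = a ^+ 2 * qf M x.
Proof. by rewrite /qf bilZl bilZr; ring. Qed.

Lemma bil_delta M x (s : T) : bil M x (fun u => (u == s)%:R) = \sum_u x u * M u s.
Proof.
rewrite /bil; apply: eq_bigr => u _.
rewrite -(sum_delta' s (fun w => x u * M u w)) /=.
by apply: eq_bigr => w _; ring.
Qed.

Lemma qf_delta M (s : T) : qf M (fun u => (u == s)%:R) = M s s.
Proof.
rewrite /qf bil_delta.
under eq_bigr => u _ do rewrite mulrC.
by rewrite sum_delta'.
Qed.

Lemma qf_add_delta M x (s : T) (t : R) : symm M ->
  qf M (fun u => x u + t * (u == s)%:R) =
  qf M x + 2 * t * (\sum_u x u * M u s) + t ^+ 2 * M s s.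
Proof.
move=> sM; rewrite qfD // qfZ bilZr bil_delta qf_delta; ring.
Qed.

Lemma psd_diag_ge0 M (s : T) : psd M -> 0 <= M s s.
Proof. by move=> pM; rewrite -qf_delta. Qed.

Lemma psd_diag0 M (s w : T) : symm M -> psd M -> M s s = 0 -> M s w = 0.
Proof.
move=> sM pM Ms0; apply/eqP; apply/negPn/negP => Hne.
have Hw : M w s != 0 by rewrite sM.
pose t := - (M w w + 1) / (2 * M w s).
have := pM (fun u => (u == w)%:R + t * (u == s)%:R).
rewrite qf_add_delta // qf_delta Ms0 expr2 mulr0 addr0.
have -> : \sum_u (u == w)%:R * M u s = M w s by rewrite sum_delta.
rewrite /t; have -> : 2 * (- (M w w + 1) / (2 * M w s)) * M w s = - (M w w + 1).
  by field; rewrite Hw.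
have -> : M w w + - (M w w + 1) = -1 by ring.
by rewrite oppr_ge0 ler10.
Qed.

Lemma qf_rank1 M x (r : T -> R) :
  qf (fun u w => M u w - r u * r w) x = qf M x - (\sum_u x u * r u) ^+ 2.
Proof.
rewrite /qf /bil expr2 big_distrl /= -sumrB; apply: eq_bigr => u _.
rewrite big_distrr /= -sumrB; apply: eq_bigr => w _; ring.
Qed.


Lemma chol_aux n : forall (S : {set T}) M, #|S| = n -> symm M -> psd M ->
  (forall u w, u \notin S -> M u w = 0) ->
  exists phi : T -> 'rV[R]_n, forall u w, M u w = dotv (phi u) (phi w).
Proof.
elim: n => [|n IH] S M cS sM pM zM.
  exists (fun _ => 0) => u w; rewrite dotv0 zM //.
  by move/eqP: cS; rewrite cards_eq0 => /eqP ->; rewrite inE.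
have : (0 < #|S|)%N by rewrite cS.
rewrite card_gt0 => /set0Pn [s sS].
pose a := M s s.
have a0 : 0 <= a by exact: psd_diag_ge0.
pose r u := if 0 < a then M s u / Num.sqrt a else 0.
pose M' u w := M u w - r u * r w.
have sM' : symm M' by move=> u w; rewrite /M' sM mulrC.
have pM' : psd M'.
  move=> x; rewrite /M' (qf_rank1 M x r).
  rewrite /r; case ap: (0 < a); last first.
    under eq_bigr => u _ do rewrite mulr0.
    by rewrite big1 // expr2 mulr0 subr0; exact: pM.
  pose b := \sum_u x u * M u s.
  have := pM (fun u => x u + (- b / a) * (u == s)%:R).
  rewrite qf_add_delta // -/b.
  have -> : \sum_u x u * (M s u / Num.sqrt a) = b / Num.sqrt a.
    by rewrite /b mulr_suml; apply: eq_bigr => u _; rewrite sM; ring.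
  have sa : Num.sqrt a ^+ 2 = a by rewrite sqr_sqrtr.
  have an : a != 0 by rewrite gt_eqF.
  have -> : (b / Num.sqrt a) ^+ 2 = b ^+ 2 / a by rewrite expr_div_n sa.
  have -> : qf M x + 2 * (- b / a) * b + (- b / a) ^+ 2 * M s s = qf M x - b ^+ 2 / a.
    by rewrite -/a; field.
  by [].
have cS' : #|S :\ s| = n.
  by move: cS; rewrite (cardsD1 s S) sS add1n => -[].
have zM' : forall u w, u \notin S :\ s -> M' u w = 0.
  move=> u w; rewrite in_setD1 negb_and negbK => /orP [/eqP ->|uS].
    rewrite /M' /r; case ap: (0 < a).
      have sa : Num.sqrt a * Num.sqrt a = a by rewrite -expr2 sqr_sqrtr.
      have sn : Num.sqrt a != 0 by rewrite gt_eqF // sqrtr_gt0.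
      have -> : M s s / Num.sqrt a = Num.sqrt a by rewrite -/a -{1}sa mulfK.
      by rewrite mulrC divfK // subrr.
    have a00 : a = 0 by apply/eqP; rewrite eq_le a0 andbT; rewrite leNgt ap.
    by rewrite psd_diag0 // mulr0 subr0.
  rewrite /M' /r zM //; case: (0 < a); last by rewrite mul0r subr0.
  by rewrite sM zM // mul0r mul0r subr0.
have [psi Hpsi] := IH _ M' cS' sM' pM' zM'.
exists (fun u => row_mx (const_mx (r u) : 'rV_1) (psi u)) => u w.
have := dotv_row_mx (const_mx (r u) : 'rV_1) (const_mx (r w)) (psi u) (psi w).
move=> /= ->; rewrite dotv_const -Hpsi /M'; ring.
Qed.

Lemma chol M : symm M -> psd M ->
  exists phi : T -> 'rV[R]_#|[set: T]|, forall u w, M u w = dotv (phi u) (phi w).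
Proof.
move=> sM pM; apply: (@chol_aux _ [set: T]) => // u w.
by rewrite finset.in_setT.
Qed.

End Basics.
Section Ex.
Variable R : realType.
Lemma ex3 (I J K : finType) (F : I -> J -> K -> R) :
  \sum_i \sum_j \sum_k F i j k = \sum_k \sum_i \sum_j F i j k.
Proof.
under eq_bigr => i _ do rewrite exchange_big.
exact: exchange_big.
Qed.
Lemma ex4 (I J K L : finType) (F : I -> J -> K -> L -> R) :
  \sum_i \sum_j \sum_k \sum_l F i j k l = \sum_l \sum_i \sum_j \sum_k F i j k l.
Proof.
under eq_bigr => i _ do rewrite ex3.
exact: exchange_big.
Qed.
Lemma ex5 (I J K L M : finType) (F : I -> J -> K -> L -> M -> R) :
  \sum_i \sum_j \sum_k \sum_l \sum_m F i j k l m = \sum_m \sum_i \sum_j \sum_k \sum_l F i j k l m.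
Proof.
under eq_bigr => i _ do rewrite ex4.
exact: exchange_big.
Qed.
Lemma ex6 (I J K L M N : finType) (F : I -> J -> K -> L -> M -> N -> R) :
  \sum_i \sum_j \sum_k \sum_l \sum_m \sum_n F i j k l m n =
  \sum_n \sum_i \sum_j \sum_k \sum_l \sum_m F i j k l m n.
Proof.
under eq_bigr => i _ do rewrite ex5.
exact: exchange_big.
Qed.
End Ex.

Section Kron.
Variable R : realType.

Lemma prod_sums (I J : finType) (a : I -> R) c (b : J -> R) :
  (\sum_i a i) * c * (\sum_j b j) = \sum_i \sum_j a i * c * b j.
Proof.
rewrite big_distrl /= big_distrl /=; apply: eq_bigr => i _.
by rewrite big_distrr.
Qed.

Lemma prod_sums2 (I J : finType) (a : I -> R) c (b : J -> R) :
  (\sum_i a i) * (\sum_j b j) * c = \sum_i \sum_j a i * b j * c.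
Proof.
rewrite big_distrl /= big_distrl /=; apply: eq_bigr => i _.
by rewrite big_distrr big_distrl.
Qed.

Lemma kron_psd (T1 T2 : finType) d1 d (sig : T1 -> 'rV[R]_d1)
  (Q : T2 -> T2 -> R) (Y : T1 -> T2 -> 'rV[R]_d) : psd Q ->
  0 <= \sum_g \sum_g' \sum_h \sum_h'
          dotv (sig g) (sig g') * Q h h' * dotv (Y g h) (Y g' h').
Proof.
move=> pQ.
have -> : \sum_g \sum_g' \sum_h \sum_h'
          dotv (sig g) (sig g') * Q h h' * dotv (Y g h) (Y g' h') =
   \sum_i \sum_j qf Q (fun h => \sum_g sig g 0 i * Y g h 0 j).
  transitivity (\sum_g \sum_g' \sum_h \sum_h' \sum_i \sum_j
     (sig g 0 i * sig g' 0 i) * Q h h' * (Y g h 0 j * Y g' h' 0 j)).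
    apply: eq_bigr => g _; apply: eq_bigr => g' _; apply: eq_bigr => h _.
    by apply: eq_bigr => h' _; rewrite !dotvE prod_sums.
  rewrite /qf /bil.
  transitivity (\sum_i \sum_j \sum_h \sum_h' \sum_g \sum_g'
     (sig g 0 i * Y g h 0 j) * (sig g' 0 i * Y g' h' 0 j) * Q h h'); last first.
    apply: eq_bigr => i _; apply: eq_bigr => j _; apply: eq_bigr => h _.
    by apply: eq_bigr => h' _; rewrite prod_sums2.
  rewrite [RHS]ex6 [RHS]ex6; apply: eq_bigr => g _; apply: eq_bigr => g' _.
  rewrite [RHS]ex4 [RHS]ex4; apply: eq_bigr => h _; apply: eq_bigr => h' _.
  apply: eq_bigr => i _; apply: eq_bigr => j _; ring.
by apply: sumr_ge0 => i _; apply: sumr_ge0 => j _; exact: pQ.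
Qed.
End Kron.

Section Prod.
Variable R : realType.
Variables (T1 T2 : finType) (e1 : rel T1) (e2 : rel T2).

Lemma dotvZ d (a b : R) (x y : 'rV[R]_d) : dotv (a *: x) (b *: y) = a * b * dotv x y.
Proof.
rewrite !dotvE big_distrr /=; apply: eq_bigr => k _; rewrite !mxE; ring.
Qed.

Lemma dotvC d (x y : 'rV[R]_d) : dotv x y = dotv y x.
Proof. by rewrite !dotvE; apply: eq_bigr => k _; rewrite mulrC. Qed.

Lemma sum_delta2 (I : finType) (F : I -> I -> R) :
  \sum_g \sum_g' (g == g')%:R * F g g' = \sum_g F g g.
Proof.
apply: eq_bigr => g _; under eq_bigr => g' _ do rewrite eq_sym.
exact: sum_delta.
Qed.

Definition Ssum d (Y : T1 -> T2 -> 'rV[R]_d) (Cf : T1 -> T1 -> T2 -> T2 -> R) :=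
  \sum_g \sum_g' \sum_h \sum_h' Cf g g' h h' * dotv (Y g h) (Y g' h').

Lemma SsumD d (Y : T1 -> T2 -> 'rV[R]_d) a C1 C2 :
  Ssum Y (fun g g' h h' => a * C1 g g' h h' + C2 g g' h h') = a * Ssum Y C1 + Ssum Y C2.
Proof.
rewrite /Ssum big_distrr -big_split /=; apply: eq_bigr => g _.
rewrite big_distrr -big_split /=; apply: eq_bigr => g' _.
rewrite big_distrr -big_split /=; apply: eq_bigr => h _.
rewrite big_distrr -big_split /=; apply: eq_bigr => h' _; ring.
Qed.

Lemma Ssum_ge0 d (Y : T1 -> T2 -> 'rV[R]_d) (S : T1 -> T1 -> R) (Q : T2 -> T2 -> R) :
  symm S -> psd S -> psd Q -> 0 <= Ssum Y (fun g g' h h' => S g g' * Q h h').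
Proof.
move=> sS pS pQ; have [sig Hs] := chol sS pS.
have := kron_psd sig Y pQ; rewrite /Ssum.
by under eq_bigr => g _ do under eq_bigr => g' _ do rewrite -Hs.
Qed.

Lemma prod_weak_duality d (phi : T1 * T2 -> 'rV[R]_d) (c : R)
  (P : T1 -> T1 -> R) (Q : T2 -> T2 -> R) (p q : R) (v : T1 -> R) (w : T2 -> R) :
  (forall x, dotv (phi x) (phi x) = 1) ->
  (forall x y, cat_prod e1 e2 x y -> dotv (phi x) (phi y) = c) ->
  symm P -> symm Q ->
  (forall g g', ~~ e1 g g' -> P g g' = 0) -> (forall h h', ~~ e2 h h' -> Q h h' = 0) ->
  psd (fun g g' => (g == g')%:R + P g g') -> psd (fun g g' => p * (g == g')%:R - P g g') ->
  psd (fun h h' => (h == h')%:R + Q h h') -> psd (fun h h' => q * (h == h')%:R - Q h h') ->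
  0 <= p -> 0 <= q ->
  \sum_g v g ^+ 2 = 1 -> \sum_h w h ^+ 2 = 1 ->
  0 <= Num.max p q + c * qf P v * qf Q w.
Proof.
move=> phi1 phie sP sQ zP zQ pP1 pP2 pQ1 pQ2 p0 q0 v1 w1.
pose m := Num.max p q.
pose Y g h := (v g * w h) *: phi (g, h).
have m0 : 0 <= m by rewrite le_max p0.
have mp : p <= m by rewrite le_max lexx.
have mq : q <= m by rewrite le_max lexx orbT.
pose D := (p + 1) * (q + 1).
have D0 : 0 < D by rewrite /D mulr_gt0 // ltr_wpDl.
have Dn : D != 0 by rewrite gt_eqF.
pose al := (m + 1) / D.
pose be := (m - q) / D.
pose ga := (m - p) / D.
pose de := 1 - (1 + p + q - m) / D.
have al0 : 0 <= al by rewrite /al divr_ge0 // ?addr_ge0 // ltW.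
have be0 : 0 <= be by rewrite /be divr_ge0 ?subr_ge0 // ltW.
have ga0 : 0 <= ga by rewrite /ga divr_ge0 ?subr_ge0 // ltW.
have de0 : 0 <= de.
  rewrite /de subr_ge0 ler_pdivrMr // mul1r /D.
  have : 0 <= p * q by rewrite mulr_ge0.
  move: m0; rewrite /m => m0 pq0; lra.
have key : Ssum Y (fun g g' h h' => m * ((g == g')%:R * (h == h')%:R) + P g g' * Q h h') =
  al * Ssum Y (fun g g' h h' => (p * (g == g')%:R - P g g') * (q * (h == h')%:R - Q h h')) +
  (be * Ssum Y (fun g g' h h' => (p * (g == g')%:R - P g g') * ((h == h')%:R + Q h h')) +
  (ga * Ssum Y (fun g g' h h' => ((g == g')%:R + P g g') * (q * (h == h')%:R - Q h h')) +
  (de * Ssum Y (fun g g' h h' => ((g == g')%:R + P g g') * ((h == h')%:R + Q h h')) + Ssum Y (fun _ _ _ _ => 0)))).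
  rewrite -!SsumD; apply: eq_bigr => g _; apply: eq_bigr => g' _.
  apply: eq_bigr => h _; apply: eq_bigr => h' _; congr (_ * _).
  have hq : 0 < q + 1 by lra.
  have hp : 0 < p + 1 by lra.
  rewrite /al /be /ga /de /D; field.
  by rewrite (gt_eqF hq) (gt_eqF hp).
have Hge : 0 <= Ssum Y (fun g g' h h' => m * ((g == g')%:R * (h == h')%:R) + P g g' * Q h h').
  have sP1 : symm (fun g g' => (g == g')%:R + P g g') by move=> x y; rewrite sP eq_sym.
  have sP2 : symm (fun g g' => p * (g == g')%:R - P g g') by move=> x y; rewrite sP eq_sym.
  have S0 : Ssum Y (fun _ _ _ _ => 0) = 0.
    by rewrite /Ssum big1 // => ? _; rewrite big1 // => ? _; rewrite big1 // => ? _;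
      rewrite big1 // => ? _; rewrite mul0r.
  rewrite key S0 addr0; apply: addr_ge0; [apply: mulr_ge0 => //; exact: Ssum_ge0|].
  apply: addr_ge0; [apply: mulr_ge0 => //; exact: Ssum_ge0|].
  apply: addr_ge0; apply: mulr_ge0 => //; exact: Ssum_ge0.
suff -> : Num.max p q + c * qf P v * qf Q w =
   Ssum Y (fun g g' h h' => m * ((g == g')%:R * (h == h')%:R) + P g g' * Q h h') by [].
rewrite SsumD; congr (_ + _).
  rewrite -[LHS]mulr1; congr (_ * _).
  transitivity (\sum_g \sum_g' (g == g')%:R *
     (\sum_h \sum_h' (h == h')%:R * dotv (Y g h) (Y g' h'))).
    symmetry; rewrite sum_delta2.
    under eq_bigr => g _ do rewrite sum_delta2.
    transitivity (\sum_g \sum_h v g ^+ 2 * w h ^+ 2).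
      apply: eq_bigr => g _; apply: eq_bigr => h _; rewrite /Y dotvZ phi1; ring.
    rewrite -[RHS]mulr1 -{1}v1 -w1 big_distrl /=; apply: eq_bigr => g _.
    by rewrite big_distrr.
  rewrite /Ssum; apply: eq_bigr => g _; apply: eq_bigr => g' _.
  rewrite big_distrr /=; apply: eq_bigr => h _; rewrite big_distrr /=.
  by apply: eq_bigr => h' _; ring.
rewrite /Ssum /qf /bil.
transitivity (\sum_g \sum_g' \sum_h \sum_h' c * (v g * v g' * P g g') * (w h * w h' * Q h h')).
  rewrite -mulrA big_distrl big_distrr /=; apply: eq_bigr => g _.
  rewrite big_distrl big_distrr /=; apply: eq_bigr => g' _.
  rewrite big_distrr big_distrr /=; apply: eq_bigr => h _.
  rewrite big_distrr big_distrr /=; apply: eq_bigr => h' _; ring.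
apply: eq_bigr => g _; apply: eq_bigr => g' _; apply: eq_bigr => h _.
apply: eq_bigr => h' _; rewrite /Y dotvZ.
case E1: (e1 g g'); last by rewrite zP ?E1 //; ring.
case E2: (e2 h h'); last by rewrite zQ ?E2 //; ring.
rewrite phie; first ring.
by rewrite /cat_prod /= E1 E2.
Qed.
End Prod.
Section Cont.
Variable R : realType.
Variable N : nat.
Local Notation V := 'rV[R]_N.

Lemma cont_cst (a : R) : continuous (fun _ : V => a).
Proof. exact: cst_continuous. Qed.

Lemma cont_add (f g : V -> R) : continuous f -> continuous g ->
  continuous (fun v => f v + g v).
Proof. move=> cf cg x. exact: (@continuousD _ R^o _ f g x (cf x) (cg x)). Qed.

Lemma cont_mul (f g : V -> R) : continuous f -> continuous g ->
  continuous (fun v => f v * g v).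
Proof. move=> cf cg x. exact: (@continuousM R V f g x (cf x) (cg x)). Qed.

Lemma cont_coord k : continuous (fun v : V => v 0 k).
Proof. exact: coord_continuous. Qed.

Lemma cont_sum (I : finType) (F : I -> V -> R) : (forall i, continuous (F i)) ->
  continuous (fun v => \sum_i F i v).
Proof.
move=> cF.
have : forall r : seq I, continuous (fun v => \sum_(i <- r) F i v).
  elim=> [|a r IH].
    have -> : (fun v => \sum_(i <- [::]) F i v) = (fun _ => 0).
      by apply/funext => v; rewrite big_nil.
    exact: cont_cst.
  have -> : (fun v => \sum_(i <- a :: r) F i v) = (fun v => F a v + \sum_(i <- r) F i v).
    by apply/funext => v; rewrite big_cons.
  exact: cont_add.
by move=> H; apply: H.
Qed.

Lemma bounded_rV (A : set V) : (forall v k, A v -> `|v 0 k| <= 1) -> bounded_set A.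
Proof.
move=> HA; exists 1; split; first exact: num_real.
move=> M M1 v Av /=.
rewrite -[`|v|]/(mx_norm v) mx_normrE.
apply: (big_ind (fun y => y <= M)).
- lra.
- by move=> a b aM bM; rewrite ge_max aM bM.
- move=> [i k] _ /=; rewrite (ord1 i); apply: le_trans (HA _ _ Av) _; lra.
Qed.
End Cont.

Section Sep.
Variable R : realType.
Variables (T : finType) (e : rel T).
Hypotheses (esym : symmetric e) (eirr : irreflexive e).
Variable c : R.

Local Notation n := #|[set: T]|.
Local Notation V := 'rV[R]_(#|T| * n).

Definition Vc (v : V) (u : T) (j : 'I_n) := v 0 (mxvec_index (enum_rank u) j).
Definition Gram (v : V) (u w : T) := \sum_j Vc v u j * Vc v w j.

Lemma embed (M : T -> T -> R) : symm M -> psd M -> exists v : V, Gram v = M.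
Proof.
move=> sM pM; have [phi Hphi] := chol sM pM.
exists (mxvec (\matrix_(i, j) phi (enum_val i) 0 j)).
apply/funext => u; apply/funext => w; rewrite Hphi dotvE /Gram.
by apply: eq_bigr => j _; rewrite /Vc !mxvecE !mxE !enum_rankK.
Qed.

Lemma Gram_sym v : symm (Gram v).
Proof. by move=> u w; rewrite /Gram; apply: eq_bigr => j _; rewrite mulrC. Qed.

Lemma Gram_psd v : psd (Gram v).
Proof.
move=> x; rewrite /qf /bil.
have -> : \sum_u \sum_w x u * x w * Gram v u w =
   \sum_j (\sum_u x u * Vc v u j) ^+ 2.
  under [RHS]eq_bigr => j _ do rewrite expr2 big_distrl /=.
  rewrite [RHS]exchange_big /=; apply: eq_bigr => u _.
  under [RHS]eq_bigr => j _ do rewrite big_distrr /=.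
  rewrite [RHS]exchange_big /=; apply: eq_bigr => w _.
  rewrite /Gram big_distrr /=; apply: eq_bigr => j _; ring.
by apply: sumr_ge0 => j _; apply: sqr_ge0.
Qed.

Lemma cont_Gram u w : continuous (fun v : V => Gram v u w).
Proof.
apply: cont_sum => j; apply: cont_mul; exact: cont_coord.
Qed.

Definition rr (X : T -> T -> R) u w := if (u == w) || e u w then X u w else 0.
Definition N0 u w : R := if u == w then 1 else if e u w then c else 0.
Definition frob (X Y : T -> T -> R) := \sum_u \sum_w X u w * Y u w.
Definition hfun X := frob (rr X) (rr X) - (frob X N0) ^+ 2 / frob N0 N0.
Definition supp (X : T -> T -> R) := forall u w, ~~ ((u == w) || e u w) -> X u w = 0.

Lemma cont_sq (f : V -> R) : continuous f -> continuous (fun v => f v ^+ 2).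
Proof.
move=> cf; have -> : (fun v => f v ^+ 2) = (fun v => f v * f v).
  by apply/funext => v; rewrite expr2.
exact: cont_mul.
Qed.

Lemma cont_h : continuous (fun v => hfun (Gram v)).
Proof.
have crr : forall u w, continuous (fun v => rr (Gram v) u w).
  move=> u w; rewrite /rr; case: ((u == w) || e u w); first exact: cont_Gram.
  exact: cont_cst.
rewrite /hfun; apply: cont_add.
  by rewrite /frob; apply: cont_sum => u; apply: cont_sum => w; apply: cont_mul.
have -> : (fun v => - ((frob (Gram v) N0) ^+ 2 / frob N0 N0)) =
  (fun v => (frob (Gram v) N0) ^+ 2 * (- (frob N0 N0)^-1)).
  by apply/funext => v; rewrite mulrN.
apply: cont_mul; last exact: cont_cst.
apply: cont_sq; rewrite /frob; apply: cont_sum => u; apply: cont_sum => w.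
apply: cont_mul; [exact: cont_Gram | exact: cont_cst].
Qed.

Lemma frobC X Y : frob X Y = frob Y X.
Proof. by apply: eq_bigr => u _; apply: eq_bigr => w _; rewrite mulrC. Qed.

Lemma frobDl X Y Z a :
  frob (fun u w => X u w + a * Y u w) Z = frob X Z + a * frob Y Z.
Proof.
rewrite /frob big_distrr -big_split /=; apply: eq_bigr => u _.
rewrite big_distrr -big_split /=; apply: eq_bigr => w _; ring.
Qed.

Lemma frob_sq X Y a :
  frob (fun u w => X u w + a * Y u w) (fun u w => X u w + a * Y u w) =
  frob X X + 2 * a * frob X Y + a ^+ 2 * frob Y Y.
Proof.
have Dr : forall Z, frob Z (fun u w => X u w + a * Y u w) = frob Z X + a * frob Z Y.
  by move=> Z; rewrite frobC frobDl !(frobC Z).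
rewrite frobDl !Dr (frobC Y X); ring.
Qed.

Lemma frob_rr X Z : supp Z -> frob (rr X) Z = frob X Z.
Proof.
move=> sZ; apply: eq_bigr => u _; apply: eq_bigr => w _; rewrite /rr.
by case: ifP => // /negbT/sZ ->; rewrite !mulr0.
Qed.

Lemma frob_rr' X Z : supp Z -> frob Z (rr X) = frob Z X.
Proof. by move=> sZ; rewrite frobC frob_rr // frobC. Qed.

Lemma supp_N0 : supp N0.
Proof. by move=> u w; rewrite negb_or /N0 => /andP[/negbTE -> /negbTE ->]. Qed.

Lemma supp_rr X : supp (rr X).
Proof. by move=> u w; rewrite /rr => /negbTE ->. Qed.

Lemma supp_comb X Y a : supp X -> supp Y -> supp (fun u w => X u w + a * Y u w).
Proof. by move=> sX sY u w H; rewrite sX // sY // mulr0 addr0. Qed.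

Lemma frob_self_ge0 X : 0 <= frob X X.
Proof. by apply: sumr_ge0 => u _; apply: sumr_ge0 => w _; rewrite -expr2 sqr_ge0. Qed.

Lemma frob_self_eq0 X : frob X X = 0 -> forall u w, X u w = 0.
Proof.
move=> H0 u0 w0; move/eqP: H0; rewrite psumr_eq0; last first.
  by move=> i _; apply: sumr_ge0 => j _; rewrite -expr2 sqr_ge0.
move=> /allP /(_ u0 (mem_index_enum u0)) /=; rewrite psumr_eq0; last first.
  by move=> j _; rewrite -expr2 sqr_ge0.
by move=> /allP /(_ w0 (mem_index_enum w0)) /=; rewrite -expr2 sqrf_eq0 => /eqP.
Qed.

Lemma n0_pos (u0 : T) : 0 < frob N0 N0.
Proof.
rewrite /frob (bigD1 u0) //= (bigD1 u0) //= /N0 eqxx mulr1.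
have H1 : 0 <= \sum_(i | i != u0) (if u0 == i then 1 else if e u0 i then c else 0) *
    (if u0 == i then 1 else if e u0 i then c else 0).
  by apply: sumr_ge0 => w _; rewrite -expr2 sqr_ge0.
have H2 : 0 <= \sum_(i | i != u0) \sum_w (if i == w then 1 else if e i w then c else 0) *
    (if i == w then 1 else if e i w then c else 0).
  by apply: sumr_ge0 => u _; apply: sumr_ge0 => w _; rewrite -expr2 sqr_ge0.
lra.
Qed.

Definition Res X u w := rr X u w + (- (frob X N0 / frob N0 N0)) * N0 u w.

Lemma hfun_le (u0 : T) X lam :
  hfun X <= frob (fun u w => rr X u w + (- lam) * N0 u w)
                 (fun u w => rr X u w + (- lam) * N0 u w).
Proof.
have n0 := n0_pos u0.
rewrite frob_sq (frob_rr X supp_N0) /hfun.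
set a := frob (rr X) (rr X); set b := frob X N0; set d := frob N0 N0.
rewrite -subr_ge0.
have -> : a + 2 * - lam * b + (- lam) ^+ 2 * d - (a - b ^+ 2 / d) = (lam * d - b) ^+ 2 / d.
  by field; rewrite gt_eqF.
by rewrite divr_ge0 ?sqr_ge0 // ltW.
Qed.

Lemma hfun_eq (u0 : T) X : hfun X = frob (Res X) (Res X).
Proof.
have n0 := n0_pos u0.
rewrite /Res frob_sq (frob_rr X supp_N0) /hfun.
by field; rewrite gt_eqF.
Qed.

Lemma term_le_sum (I : finType) (F : I -> R) i0 : (forall i, 0 <= F i) -> F i0 <= \sum_i F i.
Proof.
move=> H; rewrite (bigD1 i0) //= -{1}[F i0]addr0 lerD2l.
by apply: sumr_ge0 => i _.
Qed.

Lemma separation :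
  (~ exists d (phi : T -> 'rV[R]_d), (forall u, dotv (phi u) (phi u) = 1) /\
        (forall u w, e u w -> dotv (phi u) (phi w) = c)) ->
  exists B : T -> T -> R, exists hs : R,
   [/\ symm B, supp B, 0 < hs,
       (forall x, \sum_u x u ^+ 2 = 1 -> hs <= qf B x) & frob B N0 = 0].
Proof.
move=> Hno.
have [u0 _ | T0] := pickP (fun _ : T => true); last first.
  exfalso; apply: Hno; exists 0%N, (fun _ => 0); split => u; by have := T0 u.
have m0 : (0 < #|T|)%N by apply/card_gt0P; exists u0.
have mR : 0 < (#|T|%:R : R) by rewrite ltr0n.
have n0 := n0_pos u0.
pose Dom := (fun v : V => \sum_u Gram v u u = 1).
have memDom : forall M, symm M -> psd M -> \sum_u M u u = 1 -> exists2 v, Dom v & Gram v = M.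
  by move=> M sM pM tM; have [v Hv] := embed sM pM; exists v => //; rewrite /Dom Hv.
have Dom0 : (Dom !=set0)%classic.
  pose M0 (u w : T) : R := (u == w)%:R / #|T|%:R.
  have [|||v Dv _] := memDom M0.
  - by move=> u w; rewrite /M0 eq_sym.
  - move=> x; rewrite /qf /bil; apply: sumr_ge0 => u _.
    rewrite (bigD1 u) //= big1 ?addr0 => [|w /negbTE]; last by rewrite /M0 eq_sym => ->; rewrite mul0r mulr0.
    by rewrite /M0 eqxx mulr_ge0 // ?mul1r ?invr_ge0 ?ler0n // -expr2 sqr_ge0.
  - rewrite /M0; under eq_bigr => u _ do rewrite eqxx mul1r.
    by rewrite sumr_const -[_ *+ _]mulr_natr mulVf // gt_eqF.
  by exists v.
have cDom : compact Dom.
  apply: bounded_closed_compact.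
    apply: bounded_rV => v k Dv.
    case/mxvec_indexP: k => i j.
    have -> : v 0 (mxvec_index i j) = Vc v (enum_val i) j by rewrite /Vc enum_valK.
    set a := Vc v (enum_val i) j.
    have h1 : a ^+ 2 <= Gram v (enum_val i) (enum_val i).
      rewrite /a /Gram expr2.
      apply: (@term_le_sum _ (fun k => Vc v (enum_val i) k * Vc v (enum_val i) k) j) => k.
      by rewrite -expr2 sqr_ge0.
    have h2 : Gram v (enum_val i) (enum_val i) <= \sum_u Gram v u u.
      apply: (@term_le_sum _ (fun u => Gram v u u) (enum_val i)) => u.
      by rewrite /Gram; apply: sumr_ge0 => k _; rewrite -expr2 sqr_ge0.
    have ha : a ^+ 2 <= 1 by rewrite /Dom in Dv; lra.
    have := real_normK (num_real a); have := normr_ge0 a; nra.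
  have -> : Dom = ((fun v => \sum_u Gram v u u) @^-1` [set 1])%classic by [].
  apply: preimage_closed; last exact: closed_eq.
  move=> v _; have cs := @cont_sum _ _ _ (fun u v => Gram v u u) (fun u => @cont_Gram u u); exact: cs.
have [vs /set_mem Dvs vsmin] := EVT_min_rV Dom0 cDom (continuous_subspaceT cont_h).
set P := Gram vs.
have sP : symm P := Gram_sym vs.
pose lam := frob P N0 / frob N0 N0.
pose B := Res P.
have sB : symm B.
  by move=> u w; rewrite /B /Res /rr /N0 (eq_sym u w) (esym u w) (sP u w).
have suppB : supp B by apply: supp_comb; [exact: supp_rr | exact: supp_N0].
have BN0 : frob B N0 = 0.
  rewrite /B /Res frobDl frob_rr; last exact: supp_N0.
  by field; rewrite gt_eqF.
have hsE : hfun P = frob B B by rewrite (hfun_eq u0).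
have rrP : rr P = (fun u w => B u w + lam * N0 u w).
  by apply/funext => u; apply/funext => w; rewrite /B /Res /lam; ring.
have hs0 : 0 < frob B B.
  rewrite lt_def frob_self_ge0 andbT; apply/eqP => H0.
  have Bz := frob_self_eq0 H0.
  have Pd : forall u, P u u = lam.
    move=> u; have := congr1 (fun f => f u u) rrP; rewrite /= Bz add0r /N0 eqxx mulr1.
    by rewrite /rr eqxx.
  have mlam : #|T|%:R * lam = 1.
    move: Dvs; rewrite /Dom -/P; under eq_bigr => u _ do rewrite Pd.
    by rewrite sumr_const mulr_natl.
  apply: Hno; exists #|[set: T]|, (fun u => \row_j (Num.sqrt #|T|%:R * Vc vs u j)).
  have dE : forall u w, dotv (\row_j (Num.sqrt #|T|%:R * Vc vs u j))
              (\row_j (Num.sqrt #|T|%:R * Vc vs w j)) = #|T|%:R * P u w.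
    move=> u w; rewrite dotvE /P /Gram big_distrr /=; apply: eq_bigr => j _.
    rewrite !mxE.
    have sq : Num.sqrt (#|T|%:R : R) * Num.sqrt #|T|%:R = #|T|%:R.
      by rewrite -expr2 sqr_sqrtr // ltW.
    by rewrite mulrACA sq mulrA.
  split=> [u|u w euw]; rewrite dE; first by rewrite Pd.
  have := congr1 (fun f => f u w) rrP; rewrite /= Bz add0r /N0 /rr euw orbT.
  have -> : (u == w) = false by apply/negbTE/eqP => uw; move: euw; rewrite uw eirr.
  by move=> ->; rewrite mulrA mlam mul1r.
exists B, (frob B B); split => //.
move=> x x1.
pose Xm u w := x u * x w.
have qfB : qf B x = frob B Xm.
  by apply: eq_bigr => u _; apply: eq_bigr => w _; rewrite /Xm; ring.
pose Del u w := rr Xm u w + (-1) * rr P u w.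
pose F := frob B Del.
pose D := frob Del Del.
have Hmin : forall t, 0 < t -> t <= 1 -> 0 <= 2 * t * F + t ^+ 2 * D.
  move=> t t0 t1.
  pose Pt u w := P u w + t * (Xm u w + (-1) * P u w).
  have sPt : symm Pt by move=> u w; rewrite /Pt /Xm (sP u w); ring.
  have pPt : psd Pt.
    move=> y; have -> : qf Pt y = (1 - t) * qf P y + t * (\sum_u y u * x u) ^+ 2.
      rewrite /qf /bil expr2 big_distrl /= big_distrr big_distrr /= -big_split /=.
      apply: eq_bigr => u _; rewrite big_distrr /= big_distrr big_distrr /= -big_split /=.
      apply: eq_bigr => w _; rewrite /Pt /Xm; ring.
    apply: addr_ge0; apply: mulr_ge0; rewrite ?subr_ge0 ?sqr_ge0 //; first exact: Gram_psd.
    exact: ltW.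
  have tPt : \sum_u Pt u u = 1.
    rewrite /Pt big_split /= -big_distrr big_split /= -big_distrr /=.
    have -> : \sum_u Xm u u = 1 by rewrite -x1; apply: eq_bigr => u _; rewrite /Xm expr2.
    by move: Dvs; rewrite /Dom -/P => ->; ring.
  have [vt Dvt Gvt] := memDom _ sPt pPt tPt.
  have := vsmin vt (mem_set Dvt); rewrite -/P Gvt hsE.
  move=> Hle; have := le_trans Hle (hfun_le u0 Pt lam).
  have -> : (fun u w => rr Pt u w + - lam * N0 u w) = (fun u w => B u w + t * Del u w).
    apply/funext => u; apply/funext => w; rewrite /B /Res /Del /rr /Pt /lam.
    by case: ifP => _; ring.
  rewrite (frob_sq B Del t) -/F -/D => H; lra.
have F0 : 0 <= F.
  rewrite leNgt; apply/negP => Fneg.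
  have D0 : 0 <= D by exact: frob_self_ge0.
  pose t := - F / (D - F).
  have DF : 0 < D - F by lra.
  have t0 : 0 < t by rewrite /t divr_gt0 // oppr_gt0.
  have t1 : t <= 1 by rewrite /t ler_pdivrMr // mul1r; lra.
  have := Hmin t t0 t1.
  have tD : t * D <= - F.
    rewrite /t mulrAC ler_pdivrMr //; nra.
  nra.
have : F = frob B Xm - frob B B.
  rewrite /F /Del frobC frobDl frob_rr // frobC -/P rrP.
  rewrite (@frobDl B N0 B lam) (frobC N0 B) BN0; ring.
move=> HF; move: qfB F0; rewrite HF; lra.
Qed.


Lemma sqsum0 (x : T -> R) : \sum_u x u ^+ 2 = 0 -> forall u, x u = 0.
Proof.
move=> /eqP; rewrite psumr_eq0 => [/allP H u|u _]; last exact: sqr_ge0.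
by have := H u (mem_index_enum u); rewrite /= sqrf_eq0 => /eqP.
Qed.

Lemma qf_x0 (M : T -> T -> R) x : (forall u, x u = 0) -> qf M x = 0.
Proof.
move=> H; rewrite /qf /bil big1 // => u _; rewrite big1 // => w _.
by rewrite H !mul0r.
Qed.

Lemma normalize (x : T -> R) : \sum_u x u ^+ 2 != 0 ->
  let s := Num.sqrt (\sum_u x u ^+ 2) in
  [/\ 0 < s, 0 < \sum_u x u ^+ 2, s ^+ 2 = \sum_u x u ^+ 2, \sum_u (x u / s) ^+ 2 = 1 &
      x = (fun u => s * (x u / s))].
Proof.
move=> S0 s.
have Sge : 0 <= \sum_u x u ^+ 2 by apply: sumr_ge0 => u _; exact: sqr_ge0.
have Sgt : 0 < \sum_u x u ^+ 2 by rewrite lt_def S0.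
have s0 : 0 < s by rewrite sqrtr_gt0.
have s2 : s ^+ 2 = \sum_u x u ^+ 2 by rewrite sqr_sqrtr.
split => //.
  under eq_bigr => u _ do rewrite expr_div_n.
  by rewrite -mulr_suml -s2 divff // expf_neq0 // gt_eqF.
by apply/funext => u; rewrite mulrC divfK // gt_eqF.
Qed.

Lemma qf_lb (M : T -> T -> R) L : (forall y, \sum_u y u ^+ 2 = 1 -> L <= qf M y) ->
  forall x, L * \sum_u x u ^+ 2 <= qf M x.
Proof.
move=> H x; have [/eqP S0|S0] := boolP (\sum_u x u ^+ 2 == 0).
  by rewrite S0 mulr0 qf_x0 //; exact: sqsum0.
have [s0 Sgt s2 y1 xE] := normalize S0.
rewrite [in qf M x]xE qfZ s2 [L * _]mulrC ler_pM2l //; exact: H.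
Qed.

Lemma qf_ub (M : T -> T -> R) L : (forall y, \sum_u y u ^+ 2 = 1 -> qf M y <= L) ->
  forall x, qf M x <= L * \sum_u x u ^+ 2.
Proof.
move=> H x; have [/eqP S0|S0] := boolP (\sum_u x u ^+ 2 == 0).
  by rewrite S0 mulr0 qf_x0 //; exact: sqsum0.
have [s0 Sgt s2 y1 xE] := normalize S0.
rewrite [in qf M x]xE qfZ s2 [L * _]mulrC ler_pM2l //; exact: H.
Qed.


Lemma qf_comb (M1 M2 : T -> T -> R) a b (x : T -> R) :
  qf (fun u w => a * M1 u w + b * M2 u w) x = a * qf M1 x + b * qf M2 x.
Proof.
rewrite /qf /bil !big_distrr -big_split /=; apply: eq_bigr => u _.
rewrite !big_distrr -big_split /=; apply: eq_bigr => w _; ring.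
Qed.

Lemma qf_id (x : T -> R) : qf (fun u w : T => (u == w)%:R) x = \sum_u x u ^+ 2.
Proof.
rewrite /qf /bil; apply: eq_bigr => u _.
rewrite expr2 -(sum_delta u (fun w => x w * x u)) /=; apply: eq_bigr => w _.
by rewrite (eq_sym u w); case: (w =P u) => [->|_]; rewrite ?mulr1 ?mulr0 ?mul0r ?mul1r.
Qed.

Lemma certificate (k : R) : 1 < k -> c = - (k - 1)^-1 ->
  (~ exists d (phi : T -> 'rV[R]_d), (forall u, dotv (phi u) (phi u) = 1) /\
        (forall u w, e u w -> dotv (phi u) (phi w) = c)) ->
  forall eps, 0 < eps -> exists P : T -> T -> R, exists p : R, exists v : T -> R,
   [/\ symm P, (forall u w, ~~ e u w -> P u w = 0),
       psd (fun u w => (u == w)%:R + P u w), psd (fun u w => p * (u == w)%:R - P u w) &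
       [/\ 0 <= p, k - 1 <= p, \sum_u v u ^+ 2 = 1 & p - eps <= qf P v]].
Proof.
move=> k1 ck Hno eps eps0.
have [u0 _ | T0] := pickP (fun _ : T => true); last first.
  exfalso; apply: Hno; exists 0%N, (fun _ => 0); split => u; by have := T0 u.
have [B [hs [sB suppB hs0 Hqf BN0]]] := separation Hno.
have pB : psd B.
  move=> x; apply: le_trans (qf_lb Hqf x); apply: mulr_ge0; first exact: ltW.
  by apply: sumr_ge0 => u _; exact: sqr_ge0.
have delta1 : forall u : T, \sum_(w : T) (w == u)%:R ^+ 2 = 1 :> R.
  move=> u; rewrite -[RHS](sum_delta u (fun _ => 1)); apply: eq_bigr => w _.
  by case: (w =P u); rewrite ?expr1n ?expr0n ?mulr1 ?mul0r.
have Dpos : forall u, 0 < B u u.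
  move=> u; apply: lt_le_trans hs0 _; rewrite -(qf_delta B u); exact: Hqf.
pose y u := Num.sqrt (B u u).
have y0 : forall u, 0 < y u by move=> u; rewrite sqrtr_gt0.
have yy : forall u, y u * y u = B u u by move=> u; rewrite -expr2 sqr_sqrtr // ltW.
pose P u w := if u == w then 0 else B u w / (y u * y w).
have IPE : (fun u w => (u == w)%:R + P u w) = (fun u w => B u w / (y u * y w)).
  apply/funext => u; apply/funext => w; rewrite /P; case: (u =P w) => [->|_].
    by rewrite yy divff ?gt_eqF //=; ring.
  by rewrite /=; ring.
have sP : symm P by move=> u w; rewrite /P (eq_sym u w) (sB u w) (mulrC (y u)).
have zP : forall u w, ~~ e u w -> P u w = 0.
  move=> u w neuw; rewrite /P; case: ifP => // uw.
  by rewrite suppB ?mul0r // negb_or uw neuw.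
have pIP : psd (fun u w => (u == w)%:R + P u w).
  rewrite IPE => x; have := pB (fun u => x u / y u).
  have -> : qf B (fun u => x u / y u) = qf (fun u w => B u w / (y u * y w)) x; last by [].
  apply: eq_bigr => u _; apply: eq_bigr => w _; rewrite invfM; ring.
pose Sset := (fun r => exists2 x : T -> R, \sum_u x u ^+ 2 = 1 & r = qf P x).
have Sne : (Sset !=set0)%classic.
  by exists (qf P (fun w => (w == u0)%:R)); exists (fun w => (w == u0)%:R).
have Sub : has_ubound Sset.
  exists (\sum_u \sum_w `|P u w|) => r [x x1 ->].
  have xb : forall u, `|x u| <= 1.
    move=> u; have h1 : x u ^+ 2 <= 1.
      by rewrite -x1; apply: (@term_le_sum _ (fun u => x u ^+ 2) u) => w; exact: sqr_ge0.
    have := real_normK (num_real (x u)); have := normr_ge0 (x u); nra.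
  rewrite /qf /bil; apply: ler_sum => u _; apply: ler_sum => w _.
  apply: le_trans (ler_norm _) _; rewrite !normrM.
  rewrite -[leRHS]mul1r; apply: ler_wpM2r; first exact: normr_ge0.
  by apply: mulr_ile1; rewrite ?normr_ge0 ?xb.
have Shs : has_sup Sset by split.
pose p := sup Sset.
have pub : forall x, \sum_u x u ^+ 2 = 1 -> qf P x <= p.
  by move=> x x1; apply: sup_upper_bound => //; exists x.
have pIP2 : psd (fun u w => p * (u == w)%:R - P u w).
  move=> x; have -> : (fun u w => p * (u == w)%:R - P u w) =
     (fun u w => p * (u == w)%:R + (-1) * P u w).
    by apply/funext => u; apply/funext => w; ring.
  rewrite qf_comb.
  have -> : qf (fun u w => (u == w)%:R) x = \sum_u x u ^+ 2 by exact: qf_id.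
  have := qf_ub pub x; lra.
pose s := \sum_u B u u.
have s0 : 0 < s.
  by rewrite /s (bigD1 u0) //= ltr_pwDl ?Dpos // sumr_ge0 // => u _; exact: ltW.
pose off := \sum_u \sum_w (if u == w then 0 else B u w).
have offE : s + c * off = 0.
  rewrite -BN0 /frob /s /off big_distrr -big_split /=; apply: eq_bigr => u _.
  rewrite -(sum_delta' u (fun w => B u w)) big_distrr -big_split /=.
  apply: eq_bigr => w _; rewrite /N0 (eq_sym w u); case: (u =P w) => [<-|wu] /=.
    by rewrite mulr0 addr0.
  rewrite mulr0n mulr0 add0r.
  case euw : (e u w); first by rewrite mulrC.
  rewrite suppB ?mul0r ?mulr0 //; rewrite negb_or euw andbT.
  by apply/eqP.
have cn0 : c != 0 by rewrite ck oppr_eq0 invr_eq0 subr_eq0 gt_eqF.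
pose z u := y u / Num.sqrt s.
have ss : Num.sqrt s * Num.sqrt s = s by rewrite -expr2 sqr_sqrtr // ltW.
have ssn : Num.sqrt s != 0 by rewrite gt_eqF // sqrtr_gt0.
have z1 : \sum_u z u ^+ 2 = 1.
  transitivity (\sum_u B u u / s).
    apply: eq_bigr => u _; rewrite /z expr_div_n !expr2 yy ss //.
  by rewrite -mulr_suml divff // gt_eqF.
have qfz : qf P z = k - 1.
  transitivity (off / s).
    rewrite /qf /bil /off mulr_suml; apply: eq_bigr => u _; rewrite mulr_suml.
    apply: eq_bigr => w _; rewrite /P /z; case: ifP => _; first by rewrite mulr0 mul0r.
    rewrite -[in RHS]ss; field; rewrite ssn !gt_eqF //.
  have -> : off = - s / c by apply: (mulfI cn0); rewrite [RHS]mulrC divfK //; move: offE; lra.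
  have k0 : 0 < k - 1 by rewrite subr_gt0.
  by rewrite ck; field; rewrite !gt_eqF.
have kp : k - 1 <= p by rewrite -qfz; exact: pub.
have [r [v v1 ->] rlt] := sup_adherent eps0 Shs.
exists P, p, v; split => //; split => //; [lra | exact: ltW].
Qed.

End Sep.
Section Main.
Variable R : realType.

Definition colset (T : finType) (e : rel T) : set R :=
  (fun k : R => 1 < k /\ exists (d : nat) (phi : T -> 'rV[R]_d), strict_vector_coloring e k phi).

Lemma svchiE (T : finType) (e : rel T) : svchi R e = inf (colset e).
Proof. by []. Qed.

Lemma colset_lb (T : finType) (e : rel T) : has_lbound (colset e).
Proof. by exists 1 => k [k1 _]; exact: ltW. Qed.

Lemma cauchy_schwarz (T : finType) (x : T -> R) :
  (\sum_u x u) ^+ 2 <= #|T|%:R * \sum_u x u ^+ 2.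
Proof.
have H : 0 <= \sum_(u : T) \sum_(w : T) (x u - x w) ^+ 2.
  by apply: sumr_ge0 => u _; apply: sumr_ge0 => w _; exact: sqr_ge0.
have E : \sum_(u : T) \sum_(w : T) (x u - x w) ^+ 2 =
   2 * (#|T|%:R * \sum_u x u ^+ 2) - 2 * (\sum_u x u) ^+ 2.
  transitivity (\sum_(u : T) \sum_(w : T) (x u ^+ 2 + x w ^+ 2 + (-2) * (x u * x w))).
    by apply: eq_bigr => u _; apply: eq_bigr => w _; ring.
  have sp : forall F G : T -> T -> R, \sum_(u : T) \sum_(w : T) (F u w + G u w) =
      \sum_(u : T) \sum_(w : T) F u w + \sum_(u : T) \sum_(w : T) G u w.
    by move=> F G; rewrite -big_split /=; apply: eq_bigr => u _; rewrite big_split.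
  rewrite sp sp.
  have E1 : \sum_(u : T) \sum_(w : T) x u ^+ 2 = #|T|%:R * \sum_u x u ^+ 2.
    under eq_bigr => u _ do rewrite sumr_const -mulr_natr.
    by rewrite -big_distrl /= mulrC.
  have E2 : \sum_(u : T) \sum_(w : T) x w ^+ 2 = #|T|%:R * \sum_u x u ^+ 2.
    by rewrite sumr_const -[_ *+ _]mulr_natr mulrC.
  have E3 : \sum_(u : T) \sum_(w : T) (-2) * (x u * x w) = (-2) * (\sum_u x u) ^+ 2.
    rewrite expr2 big_distrl /= big_distrr /=; apply: eq_bigr => u _.
    by rewrite big_distrr /= big_distrr /=; apply: eq_bigr => w _; ring.
  rewrite E1 E2 E3; ring.
by move: H; rewrite E; lra.
Qed.

Lemma colset_ne (T : finType) (e : rel T) : irreflexive e -> (colset e !=set0)%classic.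
Proof.
move=> eirr.
pose m : R := #|T|%:R.
have m0 : 0 <= m by rewrite /m ler0n.
pose a := (m + 1)^-1.
have a0 : 0 < a by rewrite /a invr_gt0; lra.
have am : a * m <= 1.
  by rewrite /a ler_pdivrMl ?mulr1; lra.
pose M (u w : T) : R := (1 + a) * (u == w)%:R + (- a) * (fun _ _ : T => 1 : R) u w.
have sM : symm M by move=> u w; rewrite /M eq_sym.
have pM : psd M.
  move=> x; rewrite qf_comb qf_id.
  have -> : qf (fun _ _ : T => 1 : R) x = (\sum_u x u) ^+ 2.
    rewrite /qf /bil expr2 big_distrl /=; apply: eq_bigr => u _.
    by rewrite big_distrr /=; apply: eq_bigr => w _; ring.
  have := cauchy_schwarz x; rewrite -/m => cs.
  have S0 : 0 <= \sum_u x u ^+ 2 by apply: sumr_ge0 => u _; exact: sqr_ge0.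
  have : a * (\sum_u x u) ^+ 2 <= a * (m * \sum_u x u ^+ 2).
    by rewrite ler_pM2l.
  have : a * m * \sum_u x u ^+ 2 <= \sum_u x u ^+ 2.
    by rewrite -[leRHS]mul1r ler_wpM2r.
  nra.
have [phi Hphi] := chol sM pM.
exists (m + 2); split; first lra.
exists #|[set: T]|, phi; split=> [u|u w euw]; rewrite -Hphi /M.
  by rewrite eqxx /=; ring.
have /negPf -> : u != w by apply/eqP => H; move: euw; rewrite H eirr.
rewrite /= /a.
have -> : m + 2 - 1 = m + 1 by ring.
ring.
Qed.

Lemma colset_sub1 (T1 T2 : finType) (e1 : rel T1) (e2 : rel T2) :
  (colset e1 `<=` colset (cat_prod e1 e2))%classic.
Proof.
move=> k [k1 [d [phi [phi1 phie]]]]; split => //; exists d, (fun x => phi x.1).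
by split => [x|x y /andP [E1 _]]; [exact: phi1 | exact: phie].
Qed.

Lemma colset_sub2 (T1 T2 : finType) (e1 : rel T1) (e2 : rel T2) :
  (colset e2 `<=` colset (cat_prod e1 e2))%classic.
Proof.
move=> k [k1 [d [phi [phi1 phie]]]]; split => //; exists d, (fun x => phi x.2).
by split => [x|x y /andP [_ E2]]; [exact: phi1 | exact: phie].
Qed.

Lemma no_col (T : finType) (e : rel T) k : 1 < k -> k < inf (colset e) ->
  ~ exists d (phi : T -> 'rV[R]_d), (forall u, dotv (phi u) (phi u) = 1) /\
        (forall u w, e u w -> dotv (phi u) (phi w) = - (k - 1)^-1).
Proof.
move=> k1 kS [d [phi Hphi]].
have : inf (colset e) <= k.
  by apply: ge_inf; [exact: colset_lb | split => //; exists d, phi].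
lra.
Qed.

Lemma final_arith (k K p q a b eps : R) :
  0 < k - 1 -> k - 1 < K -> eps = (K - (k - 1)) / 3 ->
  K <= p -> K <= q -> p - eps <= a -> q - eps <= b ->
  0 <= Num.max p q + - (k - 1)^-1 * a * b -> False.
Proof.
move=> k0 kK epsE Kp Kq pa qb H.
set ka := k - 1 in k0 kK epsE H.
have e0 : 0 < eps by rewrite epsE; lra.
have Hab : a * b <= Num.max p q * ka.
  have : a * b / ka <= Num.max p q.
    by move: H; rewrite mulNr mulrAC -mulrA mulrC; lra.
  by rewrite ler_pdivrMr.
clear H; wlog pq : p q a b pa qb Kp Kq Hab / p <= q.
  move=> W; have [pq|qp] := leP p q; first exact: (W p q a b).
  apply: (W q p b a) => //; last exact: ltW.
  by rewrite mulrC maxC.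
move: Hab; rewrite max_r // => Hab.
have a0 : K - eps <= a by lra.
have h1 : (K - eps) * b <= a * b.
  by rewrite ler_wpM2r //; lra.
have h2 : (K - eps) * (q - eps) <= (K - eps) * b.
  by rewrite ler_wpM2l //; lra.
have h3 : K * (K - eps - ka) <= q * (K - eps - ka).
  by rewrite ler_wpM2r //; lra.
have h4 : 0 < K * (K - ka) by rewrite mulr_gt0 //; lra.
rewrite epsE in h1 h2 h3 a0 e0 pa qb.
nra.
Qed.

End Main.

Theorem theorem4p6 (R : realType) (T1 T2 : finType) (e1 : rel T1) (e2 : rel T2)
  (G1 : simple_graph e1) (G2 : simple_graph e2) :
  svchi R (cat_prod e1 e2) = Num.min (svchi R e1) (svchi R e2).
Proof.
case: G1 => es1 ei1; case: G2 => es2 ei2.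
have eip : irreflexive (cat_prod e1 e2) by move=> x; rewrite /cat_prod ei1.
rewrite !svchiE.
set S := @colset R _ (cat_prod e1 e2); set S1 := @colset R _ e1; set S2 := @colset R _ e2.
have le1 : inf S <= inf S1.
  apply: lb_le_inf; first exact: colset_ne.
  move=> k Sk; apply: ge_inf; [exact: colset_lb | exact: colset_sub1].
have le2 : inf S <= inf S2.
  apply: lb_le_inf; first exact: colset_ne.
  move=> k Sk; apply: ge_inf; [exact: colset_lb | exact: colset_sub2].
apply/eqP; rewrite eq_le le_min le1 le2 /=.
apply: lb_le_inf; first exact: colset_ne.
move=> k [k1 [d [phi [phi1 phie]]]].
rewrite leNgt; apply/negP => kmin.
move: (kmin); rewrite lt_min => /andP [kS1 kS2].
set mn := Num.min (inf S1) (inf S2) in kmin.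
have mn1 : mn <= inf S1 by rewrite /mn ge_min lexx.
have mn2 : mn <= inf S2 by rewrite /mn ge_min lexx orbT.
pose k' := (k + mn) / 2.
have kk' : k < k' by rewrite /k'; lra.
have k'1 : k' < inf S1 by rewrite /k'; lra.
have k'2 : k' < inf S2 by rewrite /k'; lra.
have k'g1 : 1 < k' by lra.
pose eps := (k' - 1 - (k - 1)) / 3.
have eps0 : 0 < eps by rewrite /eps; lra.
have [P [p [v [sP zP pP1 pP2 [p0 Kp v1 pv]]]]] :=
  certificate es1 ei1 k'g1 erefl (no_col k'g1 k'1) eps0.
have [Q [q [w [sQ zQ pQ1 pQ2 [q0 Kq w1 qw]]]]] :=
  certificate es2 ei2 k'g1 erefl (no_col k'g1 k'2) eps0.
have := prod_weak_duality phi1 phie sP sQ zP zQ pP1 pP2 pQ1 pQ2 p0 q0 v1 w1.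
apply: (final_arith (K := k' - 1)) => //; lra.
Qed.
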